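(* Let $\Upsilon$ be a finite alphabet with a partition $\{\Upsilon_0,\Upsilon_1\}$, where $|\Upsilon_0|=n_0$ and $|\Upsilon_1|=n_1$ are positive integers. Let $(\eta,\omega)=((\eta_\ell)_{\ell\ge1},(\omega_\ell)_{\ell\ge1})$ be a pair of nonnegative integer sequences, each with finite support. Then there exists an exhaustive prefix-free list over $\Upsilon$ whose (parity-preserving) length distribution is $(\eta,\omega)$ if and only if the following two conditions hold: (a) $\mathsf{K}^+=0$; (b) $\mathsf{K}^+_\ell\ge|\mathsf{K}^-_\ell|$ for every $\ell\ge1$.
   Context: A word over $\Upsilon$ is even (resp. odd) if it contains an even (resp. odd) number of symbols from $\Upsilon_1$; $(\Upsilon^\ell)_0$ and $(\Upsilon^\ell)_1$ denote the even and odd words of length $\ell$. A finite list $\mathcal{L}$ of nonempty words over $\Upsilon$ is prefix-free if no word in it is a prefix of another word in it, and exhaustive if every word over $\Upsilon$ either has a prefix in $\mathcal{L}$ or is a prefix of some word in $\mathcal{L}$. The (parity-preserving) length distribution of $\mathcal{L}$ is the pair $(\eta,\omega)$ with $\eta_\ell=|\mathcal{L}\cap(\Upsilon^\ell)_0|$ and $\omega_\ell=|\mathcal{L}\cap(\Upsilon^\ell)_1|$ for $\ell\ge1$. For integers $n$ and $\ell>0$ and an integer sequence $\mu=(\mu_i)_{i\ge1}$ with finite support, $\mathsf{K}_\ell(\mu,n)=n^\ell-\sum_{i=1}^{\ell}\mu_i n^{\ell-i}$. Define $\mathsf{K}^+_\ell=\mathsf{K}_\ell(\eta+\omega,n_0+n_1)$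 and $\mathsf{K}^-_\ell=\mathsf{K}_\ell(\eta-\omega,n_0-n_1)$ (with $0^0=1$). Let $\mathsf{r}$ be the largest index in the union of the supports of $\eta$ and $\omega$, and set $\mathsf{K}^\pm=\mathsf{K}^\pm_{\mathsf{r}}$. *)

(* Defs.v *)
From mathcomp Require Import all_boot all_order all_algebra.
Set Implicit Arguments. Unset Strict Implicit. Unset Printing Implicit Defensive.
Import Order.TTheory GRing.Theory Num.Theory.

(* Alphabet: a finType T, partitioned into U1 (= Upsilon_1) and its complement
   (= Upsilon_0).  Words are sequences over T. *)

Definition odd_word (T : finType) (U1 : {set T}) (w : seq T) : bool :=
  odd (count (fun x => x \in U1) w).

Definition prefix_free (T : eqType) (L : seq (seq T)) : Prop :=
  forall i j, i < size L -> j < size L -> i != j ->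
    ~~ prefix (nth [::] L i) (nth [::] L j).

Definition exhaustive (T : eqType) (L : seq (seq T)) : Prop :=
  forall w : seq T,
    (exists2 u, u \in L & prefix u w) \/ (exists2 u, u \in L & prefix w u).

Definition has_length_distribution (T : finType) (U1 : {set T})
    (L : seq (seq T)) (eta omega : nat -> nat) : Prop :=
  forall l, 0 < l ->
    count (fun w => (size w == l) && ~~ odd_word U1 w) L = eta l /\
    count (fun w => (size w == l) && odd_word U1 w) L = omega l.

Local Open Scope ring_scope.

(* K_l(mu, n) = n^l - sum_{i=1}^l mu_i n^(l-i), in int (0^0 = 1) *)
Definition Kfun (mu : nat -> int) (n : int) (l : nat) : int :=
  n ^+ l - \sum_(1 <= i < l.+1) mu i * n ^+ (l - i)%N.

Definition Kplus (eta omega : nat -> nat) (n0 n1 : nat) (l : nat) : int :=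
  Kfun (fun i => ((eta i + omega i)%N)%:Z) (n0 + n1)%:Z l.

Definition Kminus (eta omega : nat -> nat) (n0 n1 : nat) (l : nat) : int :=
  Kfun (fun i => (eta i)%:Z - (omega i)%:Z) (n0%:Z - n1%:Z) l.

(* r is the largest index (>= 1) in the union of the supports of eta, omega;
   by convention r = 0 when both sequences vanish on all indices >= 1 *)
Definition is_max_index (eta omega : nat -> nat) (r : nat) : Prop :=
  (forall l, (r < l)%N -> eta l = 0%N /\ omega l = 0%N) /\
  ((0 < r)%N -> (0 < eta r + omega r)%N).

(* Main.v *)
Require Import Defs.
From mathcomp Require Import all_boot all_order all_algebra.
From mathcomp Require Import zify ring lra.
Import Order.TTheory GRing.Theory Num.Theory.
Set Implicit Arguments. Unset Strict Implicit. Unset Printing Implicit Defensive.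

Lemma count_enum_mem (T : finType) (A : {set T}) : count (mem A) (enum T) = #|A|.
Proof. rewrite cardE -size_filter /enum_mem. congr size. congr filter.
by rewrite (@eq_filter _ _ predT) ?filter_predT. Qed.

Definition ext (T : finType) (F : seq (seq T)) := [seq rcons w x | w <- F, x <- enum T].

Lemma odd_word_rcons (T : finType) (U1 : {set T}) w x :
  odd_word U1 (rcons w x) = odd_word U1 w (+) (x \in U1).
Proof. by rewrite /odd_word -cats1 count_cat /= addn0 oddD; case: (x \in U1). Qed.

Lemma mem_ext_rcons (T : finType) (F : seq (seq T)) w x : (rcons w x \in ext F) = (w \in F).
Proof.
apply/allpairsP/idP => [[[a b] /= [Ha _ E]]|H].
  by case: (rcons_inj E) => -> _.
by exists (w, x); rewrite /= mem_enum.
Qed.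

Lemma mem_ext (T : finType) (F : seq (seq T)) v : v \in ext F ->
  exists w x, v = rcons w x /\ w \in F.
Proof. by move/allpairsP => [[a b] /= [Ha _ E]]; exists a, b. Qed.

Lemma uniq_ext (T : finType) (F : seq (seq T)) : uniq F -> uniq (ext F).
Proof.
move=> uF; apply: allpairs_uniq => //; first exact: enum_uniq.
by move=> [a b] [c d] _ _ /= /rcons_inj [-> ->].
Qed.

Lemma count_ext_even (T : finType) (U1 : {set T}) (F : seq (seq T)) :
  count (fun w => ~~ odd_word U1 w) (ext F) =
  (#|~: U1| * count (fun w => ~~ odd_word U1 w) F + #|U1| * count (odd_word U1) F)%N.
Proof.
elim: F => [|w F IH] /=; first by rewrite !muln0.
rewrite /ext allpairs_cons count_cat -/(ext F) IH count_map.
have E1 : count (preim (rcons w) (fun w0 => ~~ odd_word U1 w0)) (enum T) =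
   if odd_word U1 w then #|U1| else #|~: U1|.
  rewrite -!count_enum_mem; case E: (odd_word U1 w);
   apply: eq_count => x /=; rewrite odd_word_rcons E ?inE; by case: (x \in U1).
rewrite E1; case: (odd_word U1 w) => /=; lia.
Qed.

Lemma count_ext_odd (T : finType) (U1 : {set T}) (F : seq (seq T)) :
  count (odd_word U1) (ext F) =
  (#|U1| * count (fun w => ~~ odd_word U1 w) F + #|~: U1| * count (odd_word U1) F)%N.
Proof.
elim: F => [|w F IH] /=; first by rewrite !muln0.
rewrite /ext allpairs_cons count_cat -/(ext F) IH count_map.
have E1 : count (preim (rcons w) (odd_word U1)) (enum T) =
   if odd_word U1 w then #|~: U1| else #|U1|.
  rewrite -!count_enum_mem; case E: (odd_word U1 w);
   apply: eq_count => x /=; rewrite odd_word_rcons E ?inE; by case: (x \in U1).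
rewrite E1; case: (odd_word U1 w) => /=; lia.
Qed.

Local Open Scope ring_scope.

Lemma Kfun_S (mu : nat -> int) (n : int) l :
  Kfun mu n l.+1 = n * Kfun mu n l - mu l.+1.
Proof.
rewrite /Kfun big_nat_recr //= subnn expr0 mulr1 mulrBr exprS mulr_sumr opprD addrA.
congr (_ - _ - _); apply: eq_big_nat => i /andP [_ Hi].
by rewrite subSn // exprS mulrCA.
Qed.

Lemma Kfun_0 (mu : nat -> int) (n : int) : Kfun mu n 0 = 1.
Proof. by rewrite /Kfun big_geq // subr0. Qed.
Local Close Scope ring_scope.

Lemma pf_uniq (T : eqType) (L : seq (seq T)) : prefix_free L -> uniq L.
Proof.
move=> pf; apply/negPn/negP => /(uniqPn [::]) [i [j [ij jL E]]].
have := pf i j (ltn_trans ij jL) jL; rewrite neq_ltn ij E prefix_refl.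
by move/(_ isT).
Qed.

Lemma pf_eq (T : eqType) (L : seq (seq T)) u v : prefix_free L ->
  u \in L -> v \in L -> prefix u v -> u = v.
Proof.
move=> pf uL vL puv; case: (eqVneq (index u L) (index v L)) => E.
  by rewrite -(nth_index [::] uL) E nth_index.
have := pf _ _ _ _ E; rewrite !index_mem !nth_index // puv.
by move=> /(_ uL vL).
Qed.

Lemma count_split (T : Type) (a b : pred T) s :
  count a s = (count (fun x => a x && b x) s + count (fun x => a x && ~~ b x) s)%N.
Proof. elim: s => //= x s ->; case: (a x); case: (b x) => /=; lia. Qed.

Lemma count_uniq_eq (T : eqType) (p q : pred T) (s1 s2 : seq T) :
  uniq s1 -> uniq s2 -> (forall x, (p x && (x \in s1)) = (q x && (x \in s2))) ->
  count p s1 = count q s2.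
Proof.
move=> u1 u2 H; rewrite -!size_filter; apply: perm_size; apply: uniq_perm;
  rewrite ?filter_uniq // => x; by rewrite !mem_filter H.
Qed.

Fixpoint G (T : finType) (L : seq (seq T)) (k : nat) : seq (seq T) :=
  match k with 0 => [:: [::]] | k'.+1 => [seq v <- ext (G L k') | v \notin L] end.

Lemma G_uniq (T : finType) (L : seq (seq T)) k : uniq (G L k).
Proof. elim: k => //= k IH; exact/filter_uniq/uniq_ext. Qed.

Lemma G_size (T : finType) (L : seq (seq T)) k w : w \in G L k -> size w = k.
Proof.
elim: k w => [|k IH] w /=; first by rewrite inE => /eqP ->.
rewrite mem_filter => /andP [_ /mem_ext [w' [x [-> H]]]].
by rewrite size_rcons (IH _ H).
Qed.

Lemma G_mem1 (T : finType) (L : seq (seq T)) k w : [::] \notin L ->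
  w \in G L k -> forall i, (i <= k)%N -> take i w \notin L.
Proof.
move=> nil; elim: k w => [|k IH] w /=.
  by rewrite inE => /eqP -> i _.
move=> wG; have := wG; rewrite mem_filter => /andP [wL /mem_ext [w' [x [E H]]]] i.
rewrite leq_eqVlt => /orP [/eqP ->|ik].
  by rewrite take_oversize // (@G_size _ L k.+1 w wG).
rewrite E -cats1 takel_cat ?(G_size H) //; exact: IH.
Qed.

Lemma G_mem2 (T : finType) (L : seq (seq T)) k w : [::] \notin L ->
  size w = k -> (forall i, (i <= k)%N -> take i w \notin L) -> w \in G L k.
Proof.
move=> nil; elim: k w => [|k IH] w /=.
  by move/size0nil => ->; rewrite inE.
case/lastP: w => [//|w x]; rewrite size_rcons => -[sw] H.
rewrite mem_filter mem_ext_rcons; apply/andP; split.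
  by have := H k.+1 (leqnn _); rewrite take_oversize // size_rcons sw.
apply: IH => // i ik; have := H i (leq_trans ik (leqnSn _)).
by rewrite -cats1 takel_cat ?sw.
Qed.

Lemma G_step (T : finType) (L : seq (seq T)) k (p : pred (seq T)) :
  all (fun w => w != [::]) L -> prefix_free L ->
  (count p (G L k.+1) + count (fun w => (size w == k.+1) && p w) L)%N =
  count p (ext (G L k)).
Proof.
move=> hall pf.
have nil : [::] \notin L by apply/negP => /(allP hall).
rewrite [RHS](count_split p (fun v => v \in L)) addnC; congr (_ + _).
  symmetry; apply: count_uniq_eq; [exact/uniq_ext/G_uniq | exact: pf_uniq|] => v.
  case vL: (v \in L); rewrite ?andbF ?andbT //=.
  case: (p v); rewrite ?andbF ?andbT //=.
  apply/idP/eqP => [/mem_ext [w [x [-> H]]]|sv]; first by rewrite size_rcons (G_size H).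
  move: sv vL; case/lastP: v => [//|w x]; rewrite size_rcons => -[sw] vL.
  rewrite mem_ext_rcons; apply: G_mem2 => // i ik; apply/negP => iL.
  have E : take i w = take i (rcons w x) by rewrite -cats1 takel_cat ?sw.
  rewrite E in iL; have := pf_eq pf iL vL (prefix_take _ _) => E2.
  have := congr1 size E2; rewrite size_rcons size_takel ?size_rcons ?sw //; lia.
by rewrite /= count_filter; apply: eq_count => v /=; rewrite andbC.
Qed.

Local Open Scope ring_scope.

Lemma G_K (T : finType) (U1 : {set T}) (L : seq (seq T)) eta omega :
  all (fun w => w != [::]) L -> prefix_free L ->
  has_length_distribution U1 L eta omega -> forall k,
  (count (fun w => ~~ odd_word U1 w) (G L k) + count (odd_word U1) (G L k))%:Z
     = Kplus eta omega #|~: U1| #|U1| k /\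
  (count (fun w => ~~ odd_word U1 w) (G L k))%:Z - (count (odd_word U1) (G L k))%:Z
     = Kminus eta omega #|~: U1| #|U1| k.
Proof.
move=> hall pf hd; elim=> [|k [IH1 IH2]].
  by rewrite /Kplus /Kminus !Kfun_0.
have S1 := G_step k (fun w => ~~ odd_word U1 w) hall pf.
have S2 := G_step k (odd_word U1) hall pf.
rewrite count_ext_even in S1; rewrite count_ext_odd in S2.
have [D1 D2] := hd k.+1 isT.
rewrite D1 in S1; rewrite D2 in S2.
move: (congr1 (fun n : nat => n%:Z) S1) (congr1 (fun n : nat => n%:Z) S2) => /=.
rewrite !PoszD !PoszM => E1 E2.
rewrite /Kplus /Kminus !Kfun_S -/(Kplus eta omega _ _ k) -/(Kminus eta omega _ _ k).
rewrite -IH1 -IH2 !PoszD.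
set a := (count _ (G L k.+1)) in E1 *; set b := (count _ (G L k.+1)) in E2 *.
set c := (count _ (G L k)) in E1 E2 *; set d := (count _ (G L k)) in E1 E2 *.
split.
  have -> : a%:Z = #|~: U1|%:Z * c + #|U1|%:Z * d - (eta k.+1)%:Z by rewrite -E1 addrK.
  have -> : b%:Z = #|U1|%:Z * c + #|~: U1|%:Z * d - (omega k.+1)%:Z by rewrite -E2 addrK.
  ring.
have -> : a%:Z = #|~: U1|%:Z * c + #|U1|%:Z * d - (eta k.+1)%:Z by rewrite -E1 addrK.
have -> : b%:Z = #|U1|%:Z * c + #|~: U1|%:Z * d - (omega k.+1)%:Z by rewrite -E2 addrK.
ring.
Qed.

Lemma necessity (T : finType) (U1 : {set T}) (L : seq (seq T)) eta omega :
  all (fun w => w != [::]) L -> prefix_free L -> exhaustive L ->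
  has_length_distribution U1 L eta omega ->
  (forall r, is_max_index eta omega r -> Kplus eta omega #|~: U1| #|U1| r = 0) /\
  (forall l, (0 < l)%N ->
     `|Kminus eta omega #|~: U1| #|U1| l| <= Kplus eta omega #|~: U1| #|U1| l).
Proof.
move=> hall pf ex hd.
have nil : [::] \notin L by apply/negP => /(allP hall).
have GK := G_K hall pf hd.
split; last first.
  move=> l _; have [<- <-] := GK l; rewrite ler_norml; apply/andP; split; lia.
move=> r [mx _].
suff E : G L r = [::] by have [<- _] := GK r; rewrite E.
case E: (G L r) => [//|w s].
have wG : w \in G L r by rewrite E inE eqxx.
have sw := G_size wG.
case: (ex w) => [[u uL puw]|[u uL pwu]].
  move: puw; rewrite prefixE => /eqP tu.
  have : (size u <= r)%N by rewrite -tu size_take_min -sw geq_minr.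
  move/(G_mem1 nil wG); by rewrite tu uL.
move: pwu; rewrite prefixE sw => /eqP tu.
case: (leqP (size u) r) => su.
  have := G_mem1 nil wG (leqnn r); rewrite take_oversize ?sw //.
  by rewrite -tu take_oversize // uL.
have [e0 o0] := mx _ su.
have [D1 D2] := hd (size u) (leq_ltn_trans (leq0n _) su).
case ou: (odd_word U1 u).
  have : has (fun w => (size w == size u) && odd_word U1 w) L.
    by apply/hasP; exists u; rewrite // eqxx ou.
  by rewrite has_count D2 o0.
have : has (fun w => (size w == size u) && ~~ odd_word U1 w) L.
  by apply/hasP; exists u; rewrite // eqxx ou.
by rewrite has_count D1 e0.
Qed.

Local Close Scope ring_scope.

Definition evs (T : finType) (U1 : {set T}) (F : seq (seq T)) :=
  [seq w <- ext F | ~~ odd_word U1 w].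
Definition ods (T : finType) (U1 : {set T}) (F : seq (seq T)) :=
  [seq w <- ext F | odd_word U1 w].
Definition newl (T : finType) (U1 : {set T}) (eta omega : nat -> nat) l (F : seq (seq T)) :=
  take (eta l) (evs U1 F) ++ take (omega l) (ods U1 F).
Definition freel (T : finType) (U1 : {set T}) (eta omega : nat -> nat) l (F : seq (seq T)) :=
  drop (eta l) (evs U1 F) ++ drop (omega l) (ods U1 F).
Fixpoint Fr (T : finType) (U1 : {set T}) (eta omega : nat -> nat) k : seq (seq T) :=
  match k with 0 => [:: [::]] | k'.+1 => freel U1 eta omega k (Fr U1 eta omega k') end.
Fixpoint Lacc (T : finType) (U1 : {set T}) (eta omega : nat -> nat) k : seq (seq T) :=
  match k with 0 => [::]
  | k'.+1 => Lacc U1 eta omega k' ++ newl U1 eta omega k (Fr U1 eta omega k') end.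

Lemma perm_nf (T : finType) (U1 : {set T}) eta omega l (F : seq (seq T)) :
  perm_eq (newl U1 eta omega l F ++ freel U1 eta omega l F) (ext F).
Proof.
rewrite /newl /freel -!catA.
set a := take _ (evs U1 F); set b := take _ (ods U1 F);
set c := drop _ (evs U1 F); set d := drop _ (ods U1 F).
apply: (@perm_trans _ (a ++ c ++ b ++ d)); first by rewrite perm_cat2l perm_catCA.
rewrite catA !cat_take_drop perm_catC.
have -> : evs U1 F = [seq w <- ext F | predC (odd_word U1) w] by [].
by rewrite /ods perm_filterC.
Qed.


Lemma nf_mem (T : finType) (U1 : {set T}) eta omega l (F : seq (seq T)) v :
  (v \in ext F) = (v \in newl U1 eta omega l F) || (v \in freel U1 eta omega l F).
Proof. by rewrite -(perm_mem (perm_nf U1 eta omega l F)) mem_cat. Qed.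

Lemma nf_uniq (T : finType) (U1 : {set T}) eta omega l (F : seq (seq T)) :
  uniq F -> uniq (newl U1 eta omega l F ++ freel U1 eta omega l F).
Proof. by move=> uF; rewrite (perm_uniq (perm_nf U1 eta omega l F)) uniq_ext. Qed.

Lemma Fr_uniq (T : finType) (U1 : {set T}) eta omega k : uniq (Fr U1 eta omega k).
Proof.
elim: k => //= k IH; have := nf_uniq U1 eta omega k.+1 IH.
by rewrite cat_uniq => /and3P [].
Qed.

Lemma nf_rcons (T : finType) (U1 : {set T}) eta omega l (F : seq (seq T)) v :
  (v \in newl U1 eta omega l F) || (v \in freel U1 eta omega l F) ->
  exists w x, v = rcons w x /\ w \in F.
Proof. by rewrite -nf_mem => /mem_ext. Qed.

Lemma Fr_size (T : finType) (U1 : {set T}) eta omega k w :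
  w \in Fr U1 eta omega k -> size w = k.
Proof.
elim: k w => [|k IH] w /=; first by rewrite inE => /eqP ->.
move=> H; have [w' [x [-> H']]] := nf_rcons (introT orP (or_intror H)).
by rewrite size_rcons (IH _ H').
Qed.

Lemma Fr_take (T : finType) (U1 : {set T}) eta omega k w :
  w \in Fr U1 eta omega k -> forall i, (i <= k)%N -> take i w \in Fr U1 eta omega i.
Proof.
elim: k w => [|k IH] w /=.
  by rewrite inE => /eqP -> i; rewrite leqn0 => /eqP ->.
move=> H i; rewrite leq_eqVlt => /orP [/eqP ->|ik].
  by rewrite take_oversize // (@Fr_size _ U1 eta omega k.+1 w H).
have [w' [x [E H']]] := nf_rcons (introT orP (or_intror H)).
rewrite E -cats1 takel_cat ?(Fr_size H') //; exact: IH.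
Qed.

Lemma newl_prop (T : finType) (U1 : {set T}) eta omega k v :
  v \in newl U1 eta omega k.+1 (Fr U1 eta omega k) ->
  size v = k.+1 /\ take k v \in Fr U1 eta omega k.
Proof.
move=> H; have [w' [x [-> H']]] := nf_rcons (introT orP (or_introl H)).
by rewrite size_rcons (Fr_size H') -cats1 take_size_cat ?(Fr_size H').
Qed.

Lemma Lacc_mem (T : finType) (U1 : {set T}) eta omega m w :
  w \in Lacc U1 eta omega m -> exists2 i, (i < m)%N & w \in newl U1 eta omega i.+1 (Fr U1 eta omega i).
Proof.
elim: m => [|m IH] //=; rewrite mem_cat => /orP [/IH [i im H]|H].
  by exists i => //; exact: ltnW.
by exists m.
Qed.

Lemma Lacc_size (T : finType) (U1 : {set T}) eta omega m w :
  w \in Lacc U1 eta omega m -> (0 < size w <= m)%N.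
Proof. by case/Lacc_mem => i im /newl_prop [-> _]. Qed.

Lemma Lacc_uniq (T : finType) (U1 : {set T}) eta omega m : uniq (Lacc U1 eta omega m).
Proof.
elim: m => //= m IH; rewrite cat_uniq IH /=.
have := nf_uniq U1 eta omega m.+1 (Fr_uniq U1 eta omega m).
rewrite cat_uniq => /and3P [-> _ _]; rewrite andbT.
apply/hasPn => v /newl_prop [sv _]; apply/negP => /Lacc_size; rewrite sv; lia.
Qed.

Lemma Lacc_prefix (T : finType) (U1 : {set T}) eta omega m u v :
  u \in Lacc U1 eta omega m -> v \in Lacc U1 eta omega m -> prefix u v -> u = v.
Proof.
move=> /Lacc_mem [a _ Ha] /Lacc_mem [b _ Hb]; rewrite prefixE => /eqP tu.
have [su Fa] := newl_prop Ha; have [sv Fb] := newl_prop Hb.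
have ab : (a <= b)%N by move: (congr1 size tu); rewrite size_take_min su sv; lia.
case: (ltngtP a b) => [ab'|ba|eab];
  [|by move: ab ba; lia|by rewrite -tu su eab -sv take_size].
have : take a.+1 (take b v) \in Fr U1 eta omega a.+1 by exact: (Fr_take Fb ab').
rewrite take_takel // -su tu => uF.
have := nf_uniq U1 eta omega a.+1 (Fr_uniq U1 eta omega a).
rewrite su /= in uF.
by rewrite cat_uniq => /and3P [_ /hasPn /(_ _ uF)]; rewrite Ha.
Qed.

Lemma count_all_size (T : Type) (p : pred T) s : all p s -> count p s = size s.
Proof. by rewrite all_count => /eqP. Qed.

Lemma count_all_0 (T : Type) (p : pred T) s : all (fun x => ~~ p x) s -> count p s = 0%N.
Proof. by elim: s => //= x s IH /andP [/negbTE -> /IH ->]. Qed.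

Lemma all_drop' (T : eqType) (p : pred T) n s : all p s -> all p (drop n s).
Proof. by move=> /allP H; apply/allP => x /mem_drop /H. Qed.

Lemma all_take' (T : eqType) (p : pred T) n s : all p s -> all p (take n s).
Proof. by move=> /allP H; apply/allP => x /mem_take /H. Qed.

Lemma all_evs (T : finType) (U1 : {set T}) F : all (fun w => ~~ odd_word U1 w) (evs U1 F).
Proof. exact: filter_all. Qed.

Lemma all_ods (T : finType) (U1 : {set T}) F : all (odd_word U1) (ods U1 F).
Proof. exact: filter_all. Qed.

Lemma all_ods' (T : finType) (U1 : {set T}) F : all (fun w => ~~ ~~ odd_word U1 w) (ods U1 F).
Proof. by apply/allP => x; rewrite mem_filter negbK => /andP []. Qed.

Lemma count_freel (T : finType) (U1 : {set T}) eta omega l F :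
  count (fun w => ~~ odd_word U1 w) (freel U1 eta omega l F) = (size (evs U1 F) - eta l)%N /\
  count (odd_word U1) (freel U1 eta omega l F) = (size (ods U1 F) - omega l)%N.
Proof.
rewrite /freel !count_cat (count_all_size (all_drop' _ (all_evs U1 F)))
  (count_all_0 (all_drop' _ (all_ods' U1 F))) (count_all_size (all_drop' _ (all_ods U1 F)))
  (@count_all_0 _ (odd_word U1) _ (all_drop' _ (all_evs U1 F))) !size_drop addn0 add0n.
by [].
Qed.

Lemma count_newl (T : finType) (U1 : {set T}) eta omega l F :
  (eta l <= size (evs U1 F))%N -> (omega l <= size (ods U1 F))%N ->
  count (fun w => ~~ odd_word U1 w) (newl U1 eta omega l F) = eta l /\
  count (odd_word U1) (newl U1 eta omega l F) = omega l.
Proof.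
move=> h1 h2.
rewrite /newl !count_cat (count_all_size (all_take' _ (all_evs U1 F)))
  (count_all_0 (all_take' _ (all_ods' U1 F))) (count_all_size (all_take' _ (all_ods U1 F)))
  (@count_all_0 _ (odd_word U1) _ (all_take' _ (all_evs U1 F))) !size_takel ?addn0 ?add0n.
by []. all: by [].
Qed.

Lemma size_evs (T : finType) (U1 : {set T}) F :
  size (evs U1 F) = (#|~: U1| * count (fun w => ~~ odd_word U1 w) F + #|U1| * count (odd_word U1) F)%N.
Proof. by rewrite size_filter count_ext_even. Qed.

Lemma size_ods (T : finType) (U1 : {set T}) F :
  size (ods U1 F) = (#|U1| * count (fun w => ~~ odd_word U1 w) F + #|~: U1| * count (odd_word U1) F)%N.
Proof. by rewrite size_filter count_ext_odd. Qed.

Local Open Scope ring_scope.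

Lemma K_step (T : finType) (U1 : {set T}) eta omega k (c d : nat) :
  (c + d)%:Z = Kplus eta omega #|~: U1| #|U1| k ->
  c%:Z - d%:Z = Kminus eta omega #|~: U1| #|U1| k ->
  Kplus eta omega #|~: U1| #|U1| k.+1 =
    (#|~: U1| * c + #|U1| * d)%N%:Z + (#|U1| * c + #|~: U1| * d)%N%:Z - (eta k.+1)%:Z - (omega k.+1)%:Z /\
  Kminus eta omega #|~: U1| #|U1| k.+1 =
    (#|~: U1| * c + #|U1| * d)%N%:Z - (#|U1| * c + #|~: U1| * d)%N%:Z - (eta k.+1)%:Z + (omega k.+1)%:Z.
Proof.
rewrite /Kplus /Kminus !Kfun_S -/(Kplus eta omega _ _ k) -/(Kminus eta omega _ _ k) => <- <-.
rewrite !PoszD !PoszM; split; ring.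
Qed.

Lemma Fr_K (T : finType) (U1 : {set T}) eta omega :
  (forall l, (0 < l)%N ->
     `|Kminus eta omega #|~: U1| #|U1| l| <= Kplus eta omega #|~: U1| #|U1| l) ->
  forall k,
  [/\ (count (fun w => ~~ odd_word U1 w) (Fr U1 eta omega k) + count (odd_word U1) (Fr U1 eta omega k))%:Z
     = Kplus eta omega #|~: U1| #|U1| k,
  (count (fun w => ~~ odd_word U1 w) (Fr U1 eta omega k))%:Z - (count (odd_word U1) (Fr U1 eta omega k))%:Z
     = Kminus eta omega #|~: U1| #|U1| k,
  (eta k.+1 <= size (evs U1 (Fr U1 eta omega k)))%N &
  (omega k.+1 <= size (ods U1 (Fr U1 eta omega k)))%N].
Proof.
move=> hK.
have B : forall k, (count (fun w => ~~ odd_word U1 w) (Fr U1 eta omega k) + count (odd_word U1) (Fr U1 eta omega k))%:Z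
     = Kplus eta omega #|~: U1| #|U1| k ->
  (count (fun w => ~~ odd_word U1 w) (Fr U1 eta omega k))%:Z - (count (odd_word U1) (Fr U1 eta omega k))%:Z
     = Kminus eta omega #|~: U1| #|U1| k ->
  (eta k.+1 <= size (evs U1 (Fr U1 eta omega k)))%N /\
  (omega k.+1 <= size (ods U1 (Fr U1 eta omega k)))%N.
  move=> k E1 E2; have [P M] := K_step E1 E2.
  have := hK k.+1 isT; rewrite P M size_evs size_ods ler_norml.
  set A := (_ * _ + _ * _)%N; set B := (_ * _ + _ * _)%N.
  move=> /andP [h1 h2]; split; lia.
elim=> [|k IH].
  have E1 : (count (fun w => ~~ odd_word U1 w) (Fr U1 eta omega 0) + count (odd_word U1) (Fr U1 eta omega 0))%:Z
     = Kplus eta omega #|~: U1| #|U1| 0 by rewrite /Kplus Kfun_0.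
  have E2 : (count (fun w => ~~ odd_word U1 w) (Fr U1 eta omega 0))%:Z - (count (odd_word U1) (Fr U1 eta omega 0))%:Z
     = Kminus eta omega #|~: U1| #|U1| 0 by rewrite /Kminus Kfun_0.
  by have [] := B 0%N E1 E2.
case: IH => E1 E2 b1 b2.
have [P M] := K_step E1 E2.
have [C1 C2] := count_freel U1 eta omega k.+1 (Fr U1 eta omega k).
have E1' : (count (fun w => ~~ odd_word U1 w) (Fr U1 eta omega k.+1) + count (odd_word U1) (Fr U1 eta omega k.+1))%:Z
     = Kplus eta omega #|~: U1| #|U1| k.+1.
  rewrite P /= C1 C2 -size_evs -size_ods; lia.
have E2' : (count (fun w => ~~ odd_word U1 w) (Fr U1 eta omega k.+1))%:Z - (count (odd_word U1) (Fr U1 eta omega k.+1))%:Z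
     = Kminus eta omega #|~: U1| #|U1| k.+1.
  rewrite M /= C1 C2 -size_evs -size_ods; lia.
by have [] := B k.+1 E1' E2'.
Qed.

Lemma count_size_const (T : eqType) (p : pred (seq T)) (s : seq (seq T)) n l :
  (forall w, w \in s -> size w = n) ->
  count (fun w => (size w == l) && p w) s = if l == n then count p s else 0%N.
Proof.
move=> H; case: eqP => [->|ne].
  by apply: eq_in_count => w /H ->; rewrite eqxx.
apply: count_all_0; apply/allP => w /H sw; rewrite sw; case: eqP => //= E; by case: ne.
Qed.

Lemma Lacc_dist (T : finType) (U1 : {set T}) eta omega :
  (forall l, (0 < l)%N ->
     `|Kminus eta omega #|~: U1| #|U1| l| <= Kplus eta omega #|~: U1| #|U1| l) ->
  forall m l, (0 < l)%N ->
  count (fun w => (size w == l) && ~~ odd_word U1 w) (Lacc U1 eta omega m) = (if (l <= m)%N then eta l else 0%N) /\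
  count (fun w => (size w == l) && odd_word U1 w) (Lacc U1 eta omega m) = (if (l <= m)%N then omega l else 0%N).
Proof.
move=> hK; elim=> [|m IH] l l0 /=; first by rewrite leqNgt l0.
have [IH1 IH2] := IH l l0.
have [_ _ b1 b2] := Fr_K hK m.
have [C1 C2] := count_newl b1 b2.
have sz : forall w, w \in newl U1 eta omega m.+1 (Fr U1 eta omega m) -> size w = m.+1.
  by move=> w /newl_prop [].
have E1 : count (fun w => (size w == l) && ~~ odd_word U1 w) (newl U1 eta omega m.+1 (Fr U1 eta omega m))
  = if l == m.+1 then count (fun w => ~~ odd_word U1 w) (newl U1 eta omega m.+1 (Fr U1 eta omega m)) else 0%N.
  exact: (count_size_const (fun w => ~~ odd_word U1 w) l sz).
have E2 : count (fun w => (size w == l) && odd_word U1 w) (newl U1 eta omega m.+1 (Fr U1 eta omega m))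
  = if l == m.+1 then count (odd_word U1) (newl U1 eta omega m.+1 (Fr U1 eta omega m)) else 0%N.
  exact: (count_size_const (odd_word U1) l sz).
rewrite !(count_cat _ (Lacc U1 eta omega m)) IH1 IH2 E1 E2 C1 C2.
case: (ltngtP l m.+1) => [lm|ml|->]; rewrite ?leqnn.
- by rewrite -ltnS lm !addn0.
- by rewrite leqNgt (ltn_trans (ltnSn m) ml).
- by rewrite ltnn.
Qed.

Lemma cover (T : finType) (U1 : {set T}) eta omega k v : size v = k ->
  v \in Fr U1 eta omega k \/
  exists2 i, (i < k)%N & take i.+1 v \in newl U1 eta omega i.+1 (Fr U1 eta omega i).
Proof.
elim: k v => [|k IH] v; first by move/size0nil => ->; left; rewrite inE.
case/lastP: v => [//|w x]; rewrite size_rcons => -[sw].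
case: (IH w sw) => [wF|[i ik H]].
  have := mem_ext_rcons (Fr U1 eta omega k) w x; rewrite wF (nf_mem U1 eta omega k.+1).
  case/orP => [H|H]; last by left.
  by right; exists k => //; rewrite take_oversize // size_rcons sw.
right; exists i; first exact: ltnW.
by rewrite -cats1 takel_cat ?sw.
Qed.

Lemma newl_Lacc (T : finType) (U1 : {set T}) eta omega m i u : (i < m)%N ->
  u \in newl U1 eta omega i.+1 (Fr U1 eta omega i) -> u \in Lacc U1 eta omega m.
Proof.
elim: m => [//|m IH] im H /=; rewrite mem_cat.
case: (ltngtP i m) im => [lm _|ml|eim] //; first by rewrite IH.
  by rewrite ltnS leqNgt ml.
by rewrite -eim H orbT.
Qed.

Lemma sufficiency (T : finType) (U1 : {set T}) eta omega (t0 : T) r :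
  is_max_index eta omega r ->
  Kplus eta omega #|~: U1| #|U1| r = 0 ->
  (forall l, (0 < l)%N ->
     `|Kminus eta omega #|~: U1| #|U1| l| <= Kplus eta omega #|~: U1| #|U1| l) ->
  exists L : seq (seq T),
      all (fun w => w != [::]) L /\ prefix_free L /\ exhaustive L /\
      has_length_distribution U1 L eta omega.
Proof.
move=> [mx _] Kr hK; exists (Lacc U1 eta omega r); split; [|split; [|split]].
- by apply/allP => w /Lacc_size; case: w.
- move=> i j iL jL ij; apply/negP => P.
  have := Lacc_prefix (mem_nth [::] iL) (mem_nth [::] jL) P.
  by move/eqP; rewrite nth_uniq ?Lacc_uniq // (negbTE ij).
- have Fr0 : Fr U1 eta omega r = [::].
    have [E1 _ _ _] := Fr_K hK r; rewrite Kr in E1.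
    have : size (Fr U1 eta omega r) = 0%N.
      have E : (count (fun w => ~~ odd_word U1 w) (Fr U1 eta omega r) +
                count (odd_word U1) (Fr U1 eta omega r) = 0)%N by case: E1.
      by rewrite -(count_predC (odd_word U1)) addnC.
    by move/size0nil.
  move=> w; set v := take r (w ++ nseq r t0).
  have sv : size v = r by rewrite size_takel // size_cat size_nseq leq_addl.
  case: (cover U1 eta omega sv) => [|[i ir H]]; first by rewrite Fr0.
  have uL := newl_Lacc ir H.
  move: uL; rewrite /v take_takel // take_cat.
  case: ltnP => _ uL.
    by left; exists (take i.+1 w) => //; exact: prefix_take.
  by right; exists (w ++ take (i.+1 - size w) (nseq r t0)) => //; exact: prefix_prefix.
- move=> l l0; have [-> ->] := Lacc_dist hK r l0.
  case: leqP => // rl; by have [-> ->] := mx _ rl.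
Qed.

Lemma exists_max (f : nat -> nat) N : (forall l, (N < l)%N -> f l = 0%N) ->
  exists r, (forall l, (r < l)%N -> f l = 0%N) /\ ((0 < r)%N -> (0 < f r)%N).
Proof.
elim: N => [|N IH] H; first by exists 0%N.
case: (posnP (f N.+1)) => [f0|fp]; last first.
  by exists N.+1.
apply: IH => l; rewrite leq_eqVlt => /orP [/eqP <-|]; [exact: f0|exact: H].
Qed.

Unset Implicit Arguments.
Set Strict Implicit.

Theorem theorem4 (T : finType) (U1 : {set T}) (eta omega : nat -> nat) (N : nat)
  (n0_pos : (0 < #|~: U1|)%N) (n1_pos : (0 < #|U1|)%N)
  (eta_fin : forall l, (N < l)%N -> eta l = 0%N)
  (omega_fin : forall l, (N < l)%N -> omega l = 0%N) :
  (exists L : seq (seq T),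
      all (fun w => w != [::]) L /\ prefix_free L /\ exhaustive L /\
      has_length_distribution U1 L eta omega)
  <->
  ((forall r, is_max_index eta omega r ->
       Kplus eta omega #|~: U1| #|U1| r = 0) /\
   (forall l, (0 < l)%N ->
       `|Kminus eta omega #|~: U1| #|U1| l| <= Kplus eta omega #|~: U1| #|U1| l)).
Proof.
split.
  move=> [L [h1 [h2 [h3 h4]]]]. exact: (necessity h1 h2 h3 h4).
move=> [Ha Hb].
have [t0 _] : exists t : T, t \in U1 by apply/card_gt0P.
have [r [r1 r2]] : exists r, (forall l, (r < l)%N -> (eta l + omega l)%N = 0%N) /\
    ((0 < r)%N -> (0 < eta r + omega r)%N).
  by apply: (@exists_max _ N) => l Nl; rewrite eta_fin // omega_fin.
have mr : is_max_index eta omega r.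
  split => // l rl; have := r1 l rl; lia.
exact: (sufficiency t0 mr (Ha r mr) Hb).
Qed.
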